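(* Let $\mathcal{C}$ be a linear code of length $n$ over $\mathbb{F}_{q^m}$. The generalized subfield subcodes of $\mathcal{C}$ (over all choices of $\mathcal{B},u,f,\pi$) are exactly the codes obtained as follows: choose nonzero $a_1,\dots,a_n\in\mathbb{F}_{q^m}$ and let $V_i=\mathbb{F}_qa_i$ (an $\mathbb{F}_q$-subspace of dimension 1); set $\mathcal{C}'=\mathcal{C}\cap(V_1\times\cdots\times V_n)$; identify each $V_i$ with $\mathbb{F}_q$ via $\lambda a_i\mapsto\lambda$, giving the $\mathbb{F}_q$-linear code $C=\{(\lambda_1,\dots,\lambda_n)\in\mathbb{F}_q^n:(\lambda_1a_1,\dots,\lambda_na_n)\in\mathcal{C}'\}$; choose a permutation $\pi$ of the $n$ coordinates and return $\pi(C)$.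
   Context: For a basis $\mathcal{B}=(b_1,\dots,b_m)$ of $\mathbb{F}_{q^m}$ over $\mathbb{F}_q$, $\phi_{\mathcal{B}}(\sum_ix_ib_i)=(x_1,\dots,x_m)$ and $Im_q(\mathcal{C})=\{(\phi_{\mathcal{B}}(c_1)|\cdots|\phi_{\mathcal{B}}(c_n)):c\in\mathcal{C}\}\subseteq(\mathbb{F}_q^m)^n$. For $f=(f_1,\dots,f_n)\in GL_q(m)^n$ ($\mathbb{F}_q$-linear automorphisms of $\mathbb{F}_q^m$) and a permutation $\pi$ of $\{1,\dots,n\}$, $mon=\pi\circ f$ applies $f_i$ to the $i$-th block and then permutes the blocks by $\pi$. For $u=(u_1,\dots,u_n)\in\{1,\dots,m\}^n$ and $D\subseteq(\mathbb{F}_q^m)^n$, with $x_{j,l}$ the $l$-th coordinate of block $j$ of $x$, $S_u(D)=\{(x_{1,u_1},\dots,x_{n,u_n}):x\in D,\ x_{j,l}=0\ \forall j,\ \forall l\neq u_j\}\subseteq\mathbb{F}_q^n$. The generalized subfield subcode of $\mathcal{C}$ relative to $\mathcal{B},u,mon$ is $S_u(mon(Im_q(\mathcal{C})))$. *)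

(* Defs.v *)
From HB Require Import structures.
From mathcomp Require Import all_boot all_order all_algebra all_fingroup all_field.
Set Implicit Arguments. Unset Strict Implicit. Unset Printing Implicit Defensive.
Import GRing.Theory.
Local Open Scope ring_scope.

(* F plays F_q (finite field), L plays F_{q^m}, a finite extension of F of
   degree m = \dim {:L}.  Vectors of (F^m)^n are encoded as n x m matrices:
   row j is block j, entry (j,l) is x_{j,l}. *)

Section Defs.
Variables (F : finFieldType) (L : fieldExtType F) (n : nat).
Local Notation m := (\dim {:L}%VS).

Definition ImB (B : m.-tuple L) (c : 'rV[L]_n) : 'M[F]_(n, m) :=
  \matrix_(j, l) coord B l (c 0 j).

(* mon = pi o f : apply f_j (an invertible F-linear map, acting on row
   vectors by right multiplication) to block j, then send block j to
   position pi j. *)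
Definition mon (f : 'I_n -> 'M[F]_m) (p : 'S_n) (x : 'M[F]_(n, m))
  : 'M[F]_(n, m) :=
  \matrix_(i, l) ((row ((p^-1)%g i) x *m f ((p^-1)%g i)) 0 l).

Definition gss (C : {vspace 'rV[L]_n}) (B : m.-tuple L)
  (u : 'I_n -> 'I_m) (f : 'I_n -> 'M[F]_m) (p : 'S_n) (y : 'rV[F]_n) : Prop :=
  exists c : 'rV[L]_n, c \in C /\
    (forall j l, l != u j -> mon f p (ImB B c) j l = 0) /\
    y = \row_j mon f p (ImB B c) j (u j).

Definition is_gen_subfield_subcode (C : {vspace 'rV[L]_n})
  (D : 'rV[F]_n -> Prop) : Prop :=
  exists (B : m.-tuple L) (u : 'I_n -> 'I_m) (f : 'I_n -> 'M[F]_m) (p : 'S_n),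
    basis_of fullv B /\ (forall j, f j \in unitmx) /\
    (forall y, D y <-> gss C B u f p y).

(* permutation of coordinates: entry i moves to position p i *)
Definition permv (p : 'S_n) (v : 'rV[F]_n) : 'rV[F]_n :=
  \row_i v 0 ((p^-1)%g i).

(* C_a = { lambda in F_q^n | (lambda_1 a_1, ..., lambda_n a_n) in C }
   (= the identification of C /\ (F a_1 x ... x F a_n) with a code over F) *)
Definition restr_code (C : {vspace 'rV[L]_n}) (a : 'I_n -> L)
  (lam : 'rV[F]_n) : Prop :=
  (\row_i (lam 0 i *: a i)) \in C.

Definition is_constructed_code (C : {vspace 'rV[L]_n})
  (D : 'rV[F]_n -> Prop) : Prop :=
  exists (a : 'I_n -> L) (p : 'S_n),
    (forall i, a i != 0) /\
    (forall y, D y <-> exists lam, restr_code C a lam /\ y = permv p lam).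

End Defs.

(* Main.v *)
Require Import Defs.
From HB Require Import structures.
From mathcomp Require Import all_boot all_order all_algebra all_fingroup all_field.

Set Implicit Arguments. Unset Strict Implicit. Unset Printing Implicit Defensive.
Import GRing.Theory.
Local Open Scope ring_scope.
Import passmx.

Section Helpers.
Variables (F : finFieldType) (L : fieldExtType F) (n : nat).
Local Notation m := (\dim {:L}%VS).
Local Notation rVof := (@passmx.rVof F L).
Local Notation vecof := (@passmx.vecof F L).

Lemma rowImB (B : m.-tuple L) (c : 'rV[L]_n) k :
  row k (ImB B c) = rVof B (c 0 k).
Proof. by apply/rowP => l; rewrite !mxE. Qed.

Lemma rowmon (f : 'I_n -> 'M[F]_m) (p : 'S_n) (x : 'M[F]_(n, m)) j :
  row j (mon f p x) = row ((p^-1)%g j) x *m f ((p^-1)%g j).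
Proof. by apply/rowP => l; rewrite !mxE. Qed.

Lemma gss_rows (C : {vspace 'rV[L]_n}) (B : m.-tuple L) u f p (c : 'rV[L]_n) (s : 'I_n -> F) :
  c \in C -> (forall j, row j (mon f p (ImB B c)) = s j *: delta_mx 0 (u j)) ->
  gss C B u f p (\row_j s j).
Proof.
move=> cC H; exists c; split => //; split.
  move=> j l nl; have := congr1 (fun r : 'rV[F]_m => r 0 l) (H j).
  by rewrite !mxE (negbTE nl) andbF mulr0.
apply/rowP => j; have := congr1 (fun r : 'rV[F]_m => r 0 (u j)) (H j).
by rewrite !mxE !eqxx mulr1 => ->.
Qed.

Lemma gss_rows_inv (C : {vspace 'rV[L]_n}) (B : m.-tuple L) u f p y :
  gss C B u f p y -> exists c, c \in C /\
   forall j, row j (mon f p (ImB B c)) = y 0 j *: delta_mx 0 (u j).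
Proof.
move=> [c [cC [H0 ->]]]; exists c; split => // j; apply/rowP => l.
move: (mon f p (ImB B c)) H0 => M H0; rewrite !mxE; have [->|nl] := eqVneq l (u j); first by rewrite eqxx mulr1.
by rewrite H0 // mulr0.
Qed.

Definition gm (B : m.-tuple L) (t : L) : 'M[F]_m :=
  \matrix_i rVof B (B`_i * t).

Lemma gmE (B : m.-tuple L) t v : v *m gm B t = rVof B (vecof B v * t).
Proof.
rewrite mulmx_sum_row /passmx.vecof mulr_suml raddf_sum /=.
apply: eq_bigr => i _; by rewrite rowK -scalerAl linearZ.
Qed.

Lemma gmE2 (B : m.-tuple L) t x : basis_of fullv B ->
  rVof B x *m gm B t = rVof B (x * t).
Proof. by move=> Bb; rewrite gmE passmx.rVofK. Qed.

Lemma gm_unit (B : m.-tuple L) t : basis_of fullv B -> t != 0 ->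
  gm B t \in unitmx.
Proof.
move=> Bb tnz; have /mulmx1_unit [] // : gm B t *m gm B t^-1 = 1%:M.
apply/row_matrixP => i; rewrite row_mul rowK gmE2 // mulfK // row1.
by rewrite passmx.rVofE.
Qed.

End Helpers.

Theorem proposition8 (F : finFieldType) (L : fieldExtType F) (n : nat)
  (C : {vspace 'rV[L]_n}) (D : 'rV[F]_n -> Prop) :
  is_gen_subfield_subcode C D <-> is_constructed_code C D.
Proof.
split.
- move=> [B [u [f [p [Bb [fu HD]]]]]].
  pose a k := passmx.vecof B (delta_mx 0 (u (p k)) *m invmx (f k)).
  have rVa k : passmx.rVof B (a k) = delta_mx 0 (u (p k)) *m invmx (f k).
    by rewrite passmx.vecofK.
  exists a, p; split.
    move=> k; apply/negP => /eqP ak0.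
    have := congr1 (fun r : 'rV[F]_(\dim {:L}) => (r *m f k) 0 (u (p k))) (rVa k).
    by rewrite ak0 linear0 mul0mx mulmxKV // !mxE !eqxx /= => /eqP; rewrite eq_sym oner_eq0.
  move=> y; apply: iff_trans (HD y) _; split.
  + move=> /gss_rows_inv [c [cC H]].
    exists (\row_k y 0 (p k)); split.
      rewrite /restr_code; suff -> : \row_i ((\row_k y 0 (p k)) 0 i *: a i) = c by [].
      apply/rowP => k; rewrite !mxE.
      have := H (p k); rewrite rowmon permK rowImB => /(congr1 (mulmx^~ (invmx (f k)))).
      rewrite mulmxK // -scalemxAl -rVa -linearZ => /(congr1 (passmx.vecof B)).
      by rewrite !passmx.rVofK.
    by apply/rowP => j; rewrite !mxE permKV.
  + move=> [lam [Hr ->]].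
    have -> : permv p lam = \row_j lam 0 ((p^-1)%g j) by apply/rowP => j; rewrite !mxE.
    apply: gss_rows Hr _ => j.
    rewrite rowmon rowImB mxE linearZ /= rVa -scalemxAl mulmxKV // permKV //.
- move=> [a [p [anz HD]]].
  pose B := vbasis (fullv : {vspace L}).
  have Bb : basis_of fullv B := vbasisP _.
  have m0 : (0 < \dim {:L})%N := adim_gt0 {:L}%AS.
  pose i0 : 'I_(\dim {:L}) := Ordinal m0.
  pose b0 := B`_i0.
  have b0nz : b0 != 0.
    apply/negP => /eqP b00; have := passmx.rVofE Bb i0.
    rewrite -/b0 b00 linear0 => /(congr1 (fun r : 'rV[F]_(\dim {:L}) => r 0 i0)).
    by rewrite !mxE !eqxx /= => /eqP; rewrite eq_sym oner_eq0.
  have tnz k : b0 / a k != 0 by rewrite mulf_neq0 // invr_eq0.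
  exists B, (fun _ => i0), (fun k => gm B (b0 / a k)), p; split => //; split.
    by move=> j; apply: gm_unit.
  move=> y; apply: iff_trans (HD y) _; split.
  + move=> [lam [Hr ->]].
    have -> : permv p lam = \row_j lam 0 ((p^-1)%g j) by apply/rowP => j; rewrite !mxE.
    apply: gss_rows Hr _ => j.
    rewrite rowmon rowImB mxE gmE2 // -scalerAl mulrC divfK //.
    by rewrite linearZ /= passmx.rVofE.
  + move=> /gss_rows_inv [c [cC H]].
    exists (\row_k y 0 (p k)); split.
      rewrite /restr_code; suff -> : \row_i ((\row_k y 0 (p k)) 0 i *: a i) = c by [].
      apply/rowP => k; rewrite !mxE.
      have := H (p k); rewrite rowmon permK rowImB gmE2 // -(passmx.rVofE Bb) -linearZ.
      move=> /(congr1 (passmx.vecof B)); rewrite !passmx.rVofK // => E.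
      have -> : c 0 k = (c 0 k * (b0 / a k)) / (b0 / a k) by rewrite mulfK.
      by rewrite E -scalerAl invf_div mulrC divfK.
    by apply/rowP => j; rewrite !mxE permKV.
Qed.
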